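(* Let $n\in\mathbb{N}$ and let $v(z)=\big(\log\frac{e}{1-|z|}\big)^{-n}$ for $z\in\mathbb{D}$. Then $\sup_{t\in[0,1)}\|C_t\|_{H^\infty_v\to H^\infty_v}=\infty$.
   Context: $\mathbb{D}=\{z\in\mathbb{C}:|z|<1\}$ and $H(\mathbb{D})$ is the space of holomorphic functions on $\mathbb{D}$. For a weight $v$ (continuous non-increasing $v\colon[0,1)\to(0,\infty)$, with $v(z):=v(|z|)$), $H^\infty_v=\{f\in H(\mathbb{D}):\|f\|_{\infty,v}:=\sup_{z\in\mathbb{D}}|f(z)|v(z)<\infty\}$ with norm $\|\cdot\|_{\infty,v}$. For $t\in[0,1)$ the generalized Cesàro operator $C_t$ is defined on $f\in H(\mathbb{D})$ by $C_tf(0)=f(0)$ and $C_tf(z)=\frac{1}{z}\int_0^z\frac{f(\xi)}{1-t\xi}\,d\xi$ for $z\neq0$; it is a bounded operator on $H^\infty_v$. *)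

(* Defs.v *)
From Stdlib Require Import Reals.
From Coquelicot Require Import Coquelicot.
Open Scope R_scope.

Definition inD (z : C) : Prop := Cmod z < 1.

Definition holo_D (f : C -> C) : Prop :=
  forall z : C, inD z -> @ex_derive C_AbsRing C_NormedModule f z.

(* the weight v(r) = (log (e/(1-r)))^(-n), used as v(z) := v(|z|) *)
Definition vlog (n : nat) (r : R) : R := / (ln (exp 1 / (1 - r))) ^ n.

Definition wnorm (v : R -> R) (f : C -> C) : Rbar :=
  Lub_Rbar (fun x => exists z : C, inD z /\ x = Cmod (f z) * v (Cmod z)).

(* generalized Cesaro operator: C_t f(0) = f(0),
   C_t f(z) = (1/z) int_0^z f(xi)/(1 - t xi) dxi, the path integral being
   along the segment [0,z], xi = s z, dxi = z ds. *)
Definition Ces (t : R) (f : C -> C) (z : C) : C :=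
  if Req_EM_T (Cmod z) 0 then f z
  else Cdiv (@RInt C_R_CompleteNormedModule (fun s : R => Cmult (Cdiv (f (Cmult (RtoC s) z))
                                       (Cminus 1 (Cmult (RtoC (t * s)) z))) z)
                  0 1) z.

Definition Ces_opnorm (v : R -> R) (t : R) : Rbar :=
  Rbar_lub (fun y => exists f : C -> C,
              holo_D f /\ Rbar_le (wnorm v f) 1 /\ y = wnorm v (Ces t f)).

(* Main.v *)
Require Import Defs.
From Stdlib Require Import Reals Lra Lia.
From Coquelicot Require Import Coquelicot.
Open Scope R_scope.

Fixpoint pr (N : nat) (u : R) : R :=
  match N with O => 0 | S k => pr k u + / INR (S k) * u ^ (S k) end.
Fixpoint dp (N : nat) (u : R) : R :=
  match N with O => 0 | S k => dp k u + u ^ k end.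

Lemma dp_eq N u : dp N u * (1 - u) = 1 - u ^ N.
Proof. induction N; simpl. ring. rewrite Rmult_plus_distr_r, IHN. ring. Qed.

Lemma pr_deriv N u : is_derive (pr N) u (dp N u).
Proof. induction N; simpl.
- apply (is_derive_const 0 u).
- apply (is_derive_plus (pr N) (fun u => / INR (S N) * u ^ S N)). exact IHN.
  replace (u ^ N) with (/ INR (S N) * (INR (S N) * 1 * u ^ Init.Nat.pred (S N))).
  apply is_derive_scal. apply is_derive_pow. apply (is_derive_id u).
  simpl pred. field. apply not_0_INR. lia.
Qed.

Lemma pr_cont N u : continuous (pr N) u.
Proof. apply (@ex_derive_continuous R_AbsRing R_NormedModule (pr N) u). exists (dp N u). apply pr_deriv. Qed.

Lemma pr_0 N : pr N 0 = 0.
Proof. induction N; simpl. auto. rewrite IHN. ring. Qed.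

Lemma pr_nonneg_mono N u w : 0 <= u <= w -> 0 <= pr N u <= pr N w.
Proof. intros H. induction N. simpl; lra. cbn [pr].
  assert (0 < / INR (S N)) by (apply Rinv_0_lt_compat, lt_0_INR; lia).
  assert (0 <= u ^ S N <= w ^ S N). { split. apply pow_le; lra. apply pow_incr; lra. }
  set (a := u ^ S N) in *. set (b := w ^ S N) in *. set (c := / INR (S N)) in *.
  split; nra. Qed.

Definition G N r := - ln (1 - r) - pr N r.

Lemma G_deriv N r : r < 1 -> is_derive (G N) r (r ^ N / (1 - r)).
Proof. intro Hr. unfold G.
  replace (r ^ N / (1 - r)) with (/ (1 - r) - dp N r).
  apply (is_derive_minus (fun r => - ln (1 - r)) (pr N)).
  auto_derive. lra. field. lra. apply pr_deriv.
  assert (H := dp_eq N r). apply (Rmult_eq_reg_r (1 - r)). 2: lra.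
  rewrite Rmult_minus_distr_r, H. field. lra. Qed.

Lemma G_bounds N r : 0 <= r < 1 -> 0 <= G N r <= r ^ S N / (1 - r).
Proof. intros Hr.
  destruct (MVT_gen (G N) 0 r (fun c => c ^ N / (1 - c))) as [c [Hc Heq]].
  - intros c Hc. rewrite Rmin_left, Rmax_right in Hc by lra. apply G_deriv; lra.
  - intros c Hc. rewrite Rmin_left, Rmax_right in Hc by lra.
    apply continuity_pt_filterlim.
    apply (@ex_derive_continuous R_AbsRing R_NormedModule). eexists; apply G_deriv; lra.
  - rewrite Rmin_left, Rmax_right in Hc by lra.
    assert (G0 : G N 0 = 0) by (unfold G; rewrite pr_0; replace (1 - 0) with 1 by ring; rewrite ln_1; ring).
    rewrite G0, Rminus_0_r, Rminus_0_r in Heq.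
    assert (H1 : 0 <= c ^ N <= r ^ N) by (split; [apply pow_le | apply pow_incr]; lra).
    assert (H2 : 0 <= c ^ N / (1 - c)) by (apply Rdiv_le_0_compat; lra).
    assert (H3 : c ^ N / (1 - c) <= r ^ N / (1 - r)).
    { unfold Rdiv. apply Rmult_le_compat; try lra. left; apply Rinv_0_lt_compat; lra.
      apply Rinv_le_contravar; lra. }
    rewrite Heq. simpl. split. nra.
    replace (r * r ^ N / (1 - r)) with (r ^ N / (1 - r) * r) by (field; lra). nra.
Qed.

Lemma int_lower (K x a : R) : 0 < x < 1 -> 0 <= a <= 1 ->
  is_RInt (fun s => K / (1 - x * s * x) * x) a 1 (K * (ln (1 - x * a * x) - ln (1 - x * x)) / x).
Proof. intros Hx Ha.
  assert (Hpos : forall s, s <= 1 -> 0 < 1 - x * s * x).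
  { intros s Hs. assert (x * s * x <= x * x * 1). { replace (x*s*x) with (x*x*s) by ring. apply Rmult_le_compat_l; nra. } nra. }
  assert (H : is_RInt (fun s => K / (1 - x * s * x) * x) a 1
     (minus ((fun s => - K * ln (1 - x * s * x) / x) 1) ((fun s => - K * ln (1 - x * s * x) / x) a))).
  { apply (@is_RInt_derive R_CompleteNormedModule (fun s => - K * ln (1 - x * s * x) / x) (fun s => K / (1 - x * s * x) * x) a 1).
    - intros s Hs. rewrite Rmin_left, Rmax_right in Hs by lra.
      auto_derive. apply Hpos; lra. assert (0 < 1 - x * s * x) by (apply Hpos; lra). field; repeat split; lra.
    - intros s Hs. rewrite Rmin_left, Rmax_right in Hs by lra.
      apply (@ex_derive_continuous R_AbsRing R_NormedModule).
      auto_derive. generalize (Hpos s); lra. }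
  match type of H with is_RInt _ _ _ ?v => replace (K * (ln (1 - x * a * x) - ln (1 - x * x)) / x) with v end.
  exact H. unfold minus, plus, opp; simpl. replace (x * 1 * x) with (x * x) by ring. field. lra.
Qed.

Definition FF n N w := (1 + pr N w) ^ n.

Lemma FF_ex n N w : ex_derive (FF n N) w.
Proof. unfold FF. apply ex_derive_pow. apply (ex_derive_plus (fun _ => 1) (pr N)).
  apply ex_derive_const. exists (dp N w). apply pr_deriv. Qed.

Lemma FF_mono n N u w : 0 <= u <= w -> 1 <= 1 + pr N u /\ FF n N u <= FF n N w.
Proof. intros H. destruct (pr_nonneg_mono N u w H). split. lra. unfold FF. apply pow_incr. lra. Qed.

Definition gg n N x s := FF n N (s * x) / (1 - x * s * x) * x.

Lemma gg_cont n N x s : 0 < x < 1 -> s <= 1 -> continuous (gg n N x) s.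
Proof. intros Hx Hs.
  assert (0 < 1 - x * s * x).
  { assert (x * s * x <= x * x * 1). { replace (x*s*x) with (x*x*s) by ring. apply Rmult_le_compat_l; nra. } nra. }
  apply (@ex_derive_continuous R_AbsRing R_NormedModule). unfold gg.
  apply (ex_derive_mult (fun s => FF n N (s * x) / (1 - x * s * x)) (fun _ => x)).
  apply (ex_derive_div (fun s => FF n N (s * x)) (fun s => 1 - x * s * x)).
  apply (ex_derive_comp (FF n N) (fun s => s * x)). apply FF_ex. auto_derive; auto.
  auto_derive; auto. lra. apply ex_derive_const. Qed.

Lemma int_bound n N x u0 : 0 < x < 1 -> 0 <= u0 <= x ->
  FF n N u0 * (ln (1 - x * (u0 / x) * x) - ln (1 - x * x)) / x <= RInt (gg n N x) 0 1.
Proof. intros Hx Hu. set (a := u0 / x).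
  assert (Ha : 0 <= a <= 1). { unfold a; split. apply Rdiv_le_0_compat; lra.
    apply (Rmult_le_reg_r x). lra. unfold Rdiv. rewrite Rmult_assoc, Rinv_l; lra. }
  assert (Hax : a * x = u0) by (unfold a; field; lra).
  assert (Hpos : forall s, s <= 1 -> 0 < 1 - x * s * x).
  { intros s Hs. assert (x * s * x <= x * x * 1). { replace (x*s*x) with (x*x*s) by ring. apply Rmult_le_compat_l; nra. } nra. }
  assert (E1 : ex_RInt (gg n N x) 0 a).
  { apply (@ex_RInt_continuous R_CompleteNormedModule). intros z Hz. rewrite Rmin_left, Rmax_right in Hz by lra. apply gg_cont; lra. }
  assert (E2 : ex_RInt (gg n N x) a 1).
  { apply (@ex_RInt_continuous R_CompleteNormedModule). intros z Hz. rewrite Rmin_left, Rmax_right in Hz by lra. apply gg_cont; lra. }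
  rewrite <- (RInt_Chasles (gg n N x) 0 a 1 E1 E2).
  assert (I1 : 0 <= RInt (gg n N x) 0 a).
  { apply RInt_ge_0. lra. exact E1. intros s Hs. unfold gg.
    assert (0 <= FF n N (s * x)). { unfold FF. apply pow_le. destruct (FF_mono n N (s*x) (s*x)); nra. }
    assert (0 < 1 - x * s * x) by (apply Hpos; lra).
    apply Rmult_le_pos; [apply Rdiv_le_0_compat|]; lra. }
  assert (L := int_lower (FF n N u0) x a Hx Ha).
  apply (@is_RInt_unique R_CompleteNormedModule) in L.
  assert (I2 : RInt (fun s => FF n N u0 / (1 - x * s * x) * x) a 1 <= RInt (gg n N x) a 1).
  { apply RInt_le. lra. eexists. apply (int_lower (FF n N u0) x a Hx Ha). exact E2.
    intros s Hs. unfold gg.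
    assert (0 < 1 - x * s * x) by (apply Hpos; lra).
    assert (a * x <= s * x) by (apply Rmult_le_compat_r; lra).
    destruct (FF_mono n N u0 (s * x)) as [_ HF]. lra.
    apply Rmult_le_compat_r. lra. unfold Rdiv. apply Rmult_le_compat_r. left; apply Rinv_0_lt_compat; lra. exact HF. }
  rewrite L in I2. simpl. unfold plus; simpl. fold a. lra.
Qed.

Lemma ln2_lt_1 : ln 2 < 1.
Proof. replace 1 with (ln (exp 1)) at 1 by apply ln_exp. apply ln_increasing. lra.
  assert (H := exp_ineq1 1). lra. Qed.

Lemma numeric n N l : 1 <= l ->
  let d := exp (- l) in let u0 := 1 - d in let x := 1 - d * d in
  l <= 1 + pr N u0 ->
  (l - ln 2) / 3 ^ n <= Rabs (RInt (gg n N x) 0 1 / x) * / (ln (exp 1 / (1 - x))) ^ n.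
Proof. intros Hl d u0 x Hpr.
  assert (Hd0 : 0 < d) by apply exp_pos.
  assert (Hd1 : d < 1). { unfold d. rewrite <- exp_0. apply exp_increasing. lra. }
  assert (Hx : 0 < x < 1) by (unfold x; nra).
  assert (Hu : 0 <= u0 <= x) by (unfold u0, x; nra).
  assert (lnd : ln d = - l) by (unfold d; apply ln_exp).
  assert (B := int_bound n N x u0 Hx Hu).
  replace (x * (u0 / x) * x) with (u0 * x) in B by (field; lra).
  assert (L1 : - l <= ln (1 - u0 * x)). { rewrite <- lnd. apply ln_le. lra. unfold u0. nra. }
  assert (L2 : ln (1 - x * x) <= ln 2 - 2 * l).
  { replace (ln 2 - 2 * l) with (ln (2 * (d * d))).
    assert (He : 0 < d * d < 1) by (split; nra).
    unfold x. set (e := d * d) in *. apply ln_le; nra.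
    rewrite ln_mult, ln_mult, lnd by nra. ring. }
  assert (L3 := ln2_lt_1).
  assert (F1 : l ^ n <= FF n N u0) by (unfold FF; apply pow_incr; lra).
  assert (F0 : 0 < l ^ n) by (apply pow_lt; lra).
  assert (K1 : l ^ n * (l - ln 2) <= RInt (gg n N x) 0 1 / x).
  { apply Rle_trans with (FF n N u0 * (ln (1 - u0 * x) - ln (1 - x * x)) / x / x); [|unfold Rdiv; apply Rmult_le_compat_r; [left; apply Rinv_0_lt_compat; lra| exact B]].
    apply Rle_trans with (FF n N u0 * (ln (1 - u0 * x) - ln (1 - x * x))).
    apply Rmult_le_compat; nra.
    assert (0 <= FF n N u0 * (ln (1 - u0 * x) - ln (1 - x * x))) by nra.
    replace (FF n N u0 * (ln (1 - u0 * x) - ln (1 - x * x)) / x / x) with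
      ((FF n N u0 * (ln (1 - u0 * x) - ln (1 - x * x))) * (/ x * / x)) by (field; lra).
    assert (1 <= / x * / x).
    { assert (1 <= / x). { rewrite <- Rinv_1. apply Rinv_le_contravar; lra. } nra. }
    nra. }
  assert (E : ln (exp 1 / (1 - x)) = 1 + 2 * l).
  { replace (1 - x) with (d * d) by (unfold x; ring). rewrite ln_div, ln_exp, ln_mult, lnd by (try apply exp_pos; nra). ring. }
  rewrite E, Rabs_right by nra.
  assert (P : (1 + 2 * l) ^ n <= 3 ^ n * l ^ n).
  { rewrite <- Rpow_mult_distr. apply pow_incr. lra. }
  assert (Q : 0 < (1 + 2 * l) ^ n) by (apply pow_lt; lra).
  assert (Q3 : 0 < 3 ^ n) by (apply pow_lt; lra).
  apply Rle_trans with (l ^ n * (l - ln 2) * / (1 + 2 * l) ^ n).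
  2: { apply Rmult_le_compat_r. left; apply Rinv_0_lt_compat; lra. exact K1. }
  unfold Rdiv. apply (Rmult_le_reg_r ((1 + 2 * l) ^ n * 3 ^ n)). nra.
  replace ((l - ln 2) * / 3 ^ n * ((1 + 2 * l) ^ n * 3 ^ n)) with ((l - ln 2) * (1 + 2 * l) ^ n) by (field; lra).
  replace (l ^ n * (l - ln 2) * / (1 + 2 * l) ^ n * ((1 + 2 * l) ^ n * 3 ^ n)) with ((l - ln 2) * (3 ^ n * l ^ n)) by (field; lra).
  apply Rmult_le_compat_l; lra.
Qed.

Lemma tr (f : C -> C) z l : @is_derive C_AbsRing (AbsRing_NormedModule C_AbsRing) f z l -> @is_derive C_AbsRing C_NormedModule f z l.
Proof. intros [H1 H2]. split.
- destruct H1 as [a b [M [HM HM']]]. split; auto. exists M. split; auto.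
- intros x Hx eps. exact (H2 x Hx eps).
Qed.

Definition ent (g : C -> C) := forall z : C, exists l, @is_derive C_AbsRing (AbsRing_NormedModule C_AbsRing) g z l.

Lemma ent_const (a : C) : ent (fun _ => a).
Proof. intro z. exists zero. exact (@is_derive_const C_AbsRing (AbsRing_NormedModule C_AbsRing) a z). Qed.

Lemma ent_id : ent (fun z => z).
Proof. intro z. exists one. exact (@is_derive_id C_AbsRing z). Qed.

Lemma ent_plus f g : ent f -> ent g -> ent (fun z => Cplus (f z) (g z)).
Proof. intros Hf Hg z. destruct (Hf z) as [df Hdf]. destruct (Hg z) as [dg Hdg].
  exists (plus df dg). exact (@is_derive_plus C_AbsRing (AbsRing_NormedModule C_AbsRing) f g z df dg Hdf Hdg). Qed.

Lemma ent_mult f g : ent f -> ent g -> ent (fun z => Cmult (f z) (g z)).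
Proof. intros Hf Hg z. destruct (Hf z) as [df Hdf]. destruct (Hg z) as [dg Hdg].
  pose proof (@is_derive_mult C_AbsRing f g z df dg Hdf Hdg (fun a b => Cmult_comm a b)) as H.
  eexists. exact H. Qed.

Lemma ent_pow f n : ent f -> ent (fun z => Cpow (f z) n).
Proof. intro Hf. induction n; simpl. apply ent_const. now apply ent_mult. Qed.
Fixpoint pc (N : nat) (z : C) : C :=
  match N with O => RtoC 0 | S k => Cplus (pc k z) (Cmult (RtoC (/ INR (S k))) (Cpow z (S k))) end.


Lemma ent_pc N : ent (pc N).
Proof. induction N. exact (ent_const (RtoC 0)).
  exact (ent_plus (pc N) _ IHN (ent_mult _ _ (ent_const _) (ent_pow (fun z => z) (S N) ent_id))). Qed.

Definition fN (n N : nat) (z : C) : C := Cpow (Cplus 1 (pc N z)) n.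

Lemma holo_fN n N : holo_D (fN n N).
Proof. intros z _. unfold fN. destruct (ent_pow (fun z => Cplus 1 (pc N z)) n (ent_plus _ _ (ent_const 1) (ent_pc N)) z) as [l Hl].
  exists l. now apply tr. Qed.

Lemma pc_real N u : pc N (RtoC u) = RtoC (pr N u).
Proof. induction N. reflexivity. cbn [pc pr]. rewrite IHN.
  rewrite <- RtoC_pow, <- RtoC_mult, <- RtoC_plus. reflexivity. Qed.

Lemma pc_mod N z : Cmod (pc N z) <= pr N (Cmod z).
Proof. induction N. cbn [pc pr]. rewrite Cmod_R, Rabs_R0. lra.
  cbn [pc pr]. eapply Rle_trans. apply Cmod_triangle.
  rewrite Cmod_mult, Cmod_R, Cmod_pow, Rabs_right. lra.
  left; apply Rinv_0_lt_compat, lt_0_INR; lia. Qed.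

Lemma fN_real n N w : fN n N (RtoC w) = RtoC (FF n N w).
Proof. unfold fN, FF. rewrite pc_real, <- RtoC_plus, <- RtoC_pow. reflexivity. Qed.

Lemma wnorm_fN n N : Rbar_le (wnorm (vlog n) (fN n N)) 1.
Proof. unfold wnorm. destruct (Lub_Rbar_correct (fun x => exists z : C, inD z /\ x = Cmod (fN n N z) * vlog n (Cmod z))) as [_ Hl].
  apply Hl. intros y [z [Hz ->]]. simpl. unfold inD in Hz.
  set (r := Cmod z) in *. assert (Hr : 0 <= r) by apply Cmod_ge_0.
  assert (HG := G_bounds N r (conj Hr Hz)). unfold G in HG.
  assert (E : ln (exp 1 / (1 - r)) = 1 - ln (1 - r)) by (rewrite ln_div, ln_exp; try apply exp_pos; lra).
  unfold vlog. rewrite E.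
  assert (H1 : Cmod (fN n N z) <= (1 - ln (1 - r)) ^ n).
  { unfold fN. rewrite Cmod_pow. apply pow_incr. split. apply Cmod_ge_0.
    eapply Rle_trans. apply Cmod_triangle. rewrite Cmod_1. assert (H := pc_mod N z). fold r in H. lra. }
  assert (H2 : 0 < (1 - ln (1 - r)) ^ n).
  { apply pow_lt. destruct (pr_nonneg_mono N r r) as [H3 _]; lra. }
  apply Rle_trans with ((1 - ln (1 - r)) ^ n * / (1 - ln (1 - r)) ^ n).
  apply Rmult_le_compat_r. left; apply Rinv_0_lt_compat; lra. exact H1.
  rewrite Rinv_r; lra.
Qed.

Lemma Ces_val n N x : 0 < x < 1 -> Ces x (fN n N) (RtoC x) = RtoC (RInt (gg n N x) 0 1 / x).
Proof. intros Hx. unfold Ces. destruct Req_EM_T as [H|H].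
  { rewrite Cmod_R, Rabs_right in H; lra. }
  assert (Hpos : forall s, s <= 1 -> 0 < 1 - x * s * x).
  { intros s Hs. assert (x * s * x <= x * x * 1). { replace (x*s*x) with (x*x*s) by ring. apply Rmult_le_compat_l; nra. } nra. }
  assert (Ex : ex_RInt (gg n N x) 0 1).
  { apply (@ex_RInt_continuous R_CompleteNormedModule). intros z Hz. rewrite Rmin_left, Rmax_right in Hz by lra. apply gg_cont; lra. }
  assert (HI : @is_RInt C_R_NormedModule (fun s => RtoC (gg n N x s)) 0 1 (RtoC (RInt (gg n N x) 0 1))).
  { apply (@is_RInt_fct_extend_pair R_NormedModule R_NormedModule (fun s => RtoC (gg n N x s)) 0 1 (RInt (gg n N x) 0 1) 0).
    simpl. apply (@RInt_correct R_CompleteNormedModule). exact Ex.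
    simpl. replace 0 with (scal (1 - 0) 0) at 2 by apply (@scal_zero_r R_Ring R_ModuleSpace).
    apply (@is_RInt_const R_NormedModule). }
  assert (HI2 : @is_RInt C_R_NormedModule (fun s : R => Cmult (Cdiv (fN n N (Cmult (RtoC s) (RtoC x)))
                                       (Cminus 1 (Cmult (RtoC (x * s)) (RtoC x)))) (RtoC x)) 0 1 (RtoC (RInt (gg n N x) 0 1))).
  { apply (@is_RInt_ext C_R_NormedModule (fun s => RtoC (gg n N x s))); [|exact HI].
    intros s Hs. rewrite Rmin_left, Rmax_right in Hs by lra.
    assert (0 < 1 - x * s * x) by (apply Hpos; lra).
    rewrite <- RtoC_mult, <- RtoC_mult, fN_real, <- RtoC_minus, <- RtoC_div, <- RtoC_mult by lra.
    reflexivity. }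
  rewrite (@is_RInt_unique C_R_CompleteNormedModule _ _ _ _ HI2).
  rewrite <- RtoC_div by lra. reflexivity.
Qed.

Lemma find_N (u0 d : R) : 0 <= u0 < 1 -> 0 < d -> exists N, u0 ^ S N < d.
Proof. intros Hu Hd. assert (Ha : Rabs u0 < 1) by (rewrite Rabs_right; lra).
  destruct (pow_lt_1_zero u0 Ha d Hd) as [N0 HN].
  exists N0. assert (H := HN (S N0) (le_S _ _ (le_n _))). rewrite Rabs_right in H. exact H.
  apply Rle_ge, pow_le; lra. Qed.

Theorem proposition2p12 (n : nat) :
  Rbar_lub (fun y => exists t : R, 0 <= t < 1 /\ y = Ces_opnorm (vlog n) t)
  = p_infty.
Proof.
  unfold Rbar_lub at 1. destruct (Rbar_ex_lub _) as [l Hl]. simpl. destruct Hl as [Hub _].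
  assert (Hall : forall M, Rbar_le (Finite M) l).
  { intro M.
    set (lam := Rmax 1 (3 ^ n * Rabs M + 1)).
    assert (Hl1 : 1 <= lam) by apply Rmax_l.
    assert (Hl2 : 3 ^ n * Rabs M + 1 <= lam) by apply Rmax_r.
    set (d := exp (- lam)). set (u0 := 1 - d). set (x := 1 - d * d).
    assert (Hd0 : 0 < d) by apply exp_pos.
    assert (Hd1 : d < 1). { unfold d. rewrite <- exp_0. apply exp_increasing. lra. }
    assert (Hx : 0 < x < 1) by (unfold x; nra).
    assert (Hu : 0 <= u0 < 1) by (unfold u0; lra).
    destruct (find_N u0 d Hu Hd0) as [N HN].
    assert (Hpr : lam <= 1 + pr N u0).
    { assert (HG := G_bounds N u0 Hu). unfold G in HG.
      replace (1 - u0) with d in HG by (unfold u0; ring).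
      assert (lnd : ln d = - lam) by (unfold d; apply ln_exp).
      rewrite lnd in HG.
      assert (u0 ^ S N / d < 1). { apply (Rmult_lt_reg_r d). lra. unfold Rdiv. rewrite Rmult_assoc, Rinv_l; lra. }
      lra. }
    assert (Hnum := numeric n N lam Hl1 Hpr). simpl in Hnum. fold d u0 x in Hnum.
    assert (L3 := ln2_lt_1).
    assert (Q3 : 0 < 3 ^ n) by (apply pow_lt; lra).
    assert (HM : M <= (lam - ln 2) / 3 ^ n).
    { apply (Rmult_le_reg_r (3 ^ n)). lra. unfold Rdiv. rewrite Rmult_assoc, Rinv_l by lra.
      assert (M <= Rabs M) by apply Rle_abs. nra. }
    apply Rbar_le_trans with (Finite (Cmod (Ces x (fN n N) (RtoC x)) * vlog n (Cmod (RtoC x)))).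
    { simpl. rewrite Ces_val by exact Hx. rewrite !Cmod_R. rewrite (Rabs_right x) by lra.
      unfold vlog. lra. }
    apply Rbar_le_trans with (wnorm (vlog n) (Ces x (fN n N))).
    { unfold wnorm. destruct (Lub_Rbar_correct (fun y => exists z : C, inD z /\ y = Cmod (Ces x (fN n N) z) * vlog n (Cmod z))) as [ub _].
      apply ub. exists (RtoC x). split; [|reflexivity]. unfold inD. rewrite Cmod_R, Rabs_right; lra. }
    apply Rbar_le_trans with (Ces_opnorm (vlog n) x).
    { unfold Ces_opnorm, Rbar_lub. destruct (Rbar_ex_lub _) as [l2 Hlub2]. simpl. destruct Hlub2 as [ub2 _].
      apply ub2. exists (fN n N). split. apply holo_fN. split. apply wnorm_fN. reflexivity. }
    apply Hub. exists x. split. lra. reflexivity. }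
  destruct l as [r| |].
  - exfalso. assert (H := Hall (r + 1)). simpl in H. lra.
  - reflexivity.
  - exfalso. exact (Hall 0).
Qed.
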